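(* Let $G$ be a bipartite instance, let $(u,v)\in E$ with $u$'s deadline earlier than $v$'s, and fix the ranks $\mathbf y_{-uv}$ of all vertices other than $u,v$. Let $\tau$ be the marginal rank of $u$ w.r.t. $\mathbf y_{-uv}$ in $G-\{v\}$, $\gamma$ the marginal rank of $v$ w.r.t. $\mathbf y_{-uv}$ in $G-\{u\}$, and for $y_u\in[0,1]$ let $\theta(y_u)$ be the marginal rank of $v$ in $G$ w.r.t. the ranks $(y_u,\mathbf y_{-uv})$. Then for every fixed $y_u>\tau$, with $y_v$ uniform on $[0,1)$, $$\mathbb{E}_{y_v}\big[\alpha_u+\alpha_v\mathbf 1(y_v>\gamma)\big]\ge 1-\gamma-(1-\theta(y_u))\,g(\theta(y_u))+\gamma\cdot\min\{g(y_u),\,1-g(\theta(y_u))\}.$$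
   Context: Fully online matching model on a graph $G=(V,E)$: each step is the arrival or the deadline of a vertex; at arrival, edges to previously arrived vertices are revealed; every neighbor of $v$ arrives before $v$'s deadline; at a vertex's deadline, if unmatched, it is irrevocably matched to an unmatched neighbor or left unmatched. Ranking: each vertex $w$ has a rank $y_w\in[0,1)$ (drawn uniformly at random on arrival); at the deadline of an unmatched vertex $w$, if it has unmatched neighbors it is matched to the unmatched neighbor of minimum rank. $M(\mathbf y)$ is the resulting matching for rank vector $\mathbf y$. If an edge $(a,b)$ is matched at $a$'s deadline, $a$ is called active and $b$ passive. Fix a non-decreasing $g:[0,1]\to[0,1]$ with $g(1)=1$. Dual variables: if $(a,b)$ is matched with $a$ active and $b$ passive, set $\alpha_a=1-g(y_b)$ and $\alpha_b=g(y_b)$; unmatched vertices have $\alpha=0$. Marginal rank: for a vertex $w$ in a graph $H$ and fixed ranks of all other vertices of $H$, the marginal rank of $w$ is the largest value $\theta\in[0,1]$ such that $w$ is passive in the matching produced by Ranking on $H$ when $y_w=\theta^-$ (rank infinitesimally below $\theta$); it equals $0$ if no such value exists. *)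

(* Defs.v *)
From Stdlib Require Import Reals Lra Lia List Permutation Arith.
Import ListNotations.
Open Scope R_scope.

(* Vertices are 0..n-1 (naturals).  [adj : nat -> nat -> bool] is the edge
   relation.  [ord] lists the vertices in the order of their deadlines.
   Since every neighbour of w arrives before w's deadline and matches are
   irrevocable, Ranking's run depends only on the graph and the deadline order:
   at w's deadline the whole neighbourhood of w is known. *)

Definition fo_instance (n : nat) (adj : nat -> nat -> bool) (ord : list nat) : Prop :=
  (forall a b, adj a b = adj b a) /\
  (forall a, adj a a = false) /\
  Permutation ord (seq 0 n).

Definition bipartite (n : nat) (adj : nat -> nat -> bool) : Prop :=
  exists side : nat -> bool,
    forall a b, (a < n)%nat -> (b < n)%nat -> adj a b = true -> side a <> side b.

Definition deadline_before (ord : list nat) (a b : nat) : Prop :=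
  exists l1 l2 l3, ord = l1 ++ a :: l2 ++ b :: l3.

Definition upd (y : nat -> R) (w : nat) (t : R) : nat -> R :=
  fun x => if Nat.eqb x w then t else y x.

(* A matching is a list of pairs (active, passive). *)
Definition matchedb (M : list (nat * nat)) (w : nat) : bool :=
  existsb (fun p => orb (Nat.eqb (fst p) w) (Nat.eqb (snd p) w)) M.

(* element of minimum rank; ties broken towards the earlier element (smaller index) *)
Fixpoint argmin (y : nat -> R) (best : nat) (l : list nat) : nat :=
  match l with
  | [] => best
  | x :: l' => if Rlt_dec (y x) (y best) then argmin y x l' else argmin y best l'
  end.

(* Ranking on the induced subgraph G[S]: deadline of w *)
Definition ranking_step (n : nat) (adj : nat -> nat -> bool) (S : nat -> bool)
    (y : nat -> R) (M : list (nat * nat)) (w : nat) : list (nat * nat) :=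
  if andb (S w) (negb (matchedb M w)) then
    match filter (fun x => andb (andb (S x) (adj w x)) (negb (matchedb M x))) (seq 0 n) with
    | [] => M
    | c :: cs => (w, argmin y c cs) :: M
    end
  else M.

Definition ranking (n : nat) (adj : nat -> nat -> bool) (ord : list nat)
    (S : nat -> bool) (y : nat -> R) : list (nat * nat) :=
  fold_left (ranking_step n adj S y) ord [].

Definition allv : nat -> bool := fun _ => true.
Definition minus1 (v : nat) : nat -> bool := fun x => negb (Nat.eqb x v).

Definition passive (M : list (nat * nat)) (w : nat) : Prop :=
  existsb (fun p => Nat.eqb (snd p) w) M = true.

Definition alpha (g : R -> R) (y : nat -> R) (M : list (nat * nat)) (w : nat) : R :=
  match find (fun p => Nat.eqb (fst p) w) M with
  | Some (_, b) => 1 - g (y b)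
  | None =>
      match find (fun p => Nat.eqb (snd p) w) M with
      | Some _ => g (y w)
      | None => 0
      end
  end.

Definition passive_below (n : nat) (adj : nat -> nat -> bool) (ord : list nat)
    (S : nat -> bool) (y : nat -> R) (w : nat) (theta : R) : Prop :=
  0 < theta <= 1 /\
  exists eps, eps > 0 /\
    forall t, theta - eps < t < theta -> 0 <= t ->
      passive (ranking n adj ord S (upd y w t)) w.

Definition is_marginal_rank (n : nat) (adj : nat -> nat -> bool) (ord : list nat)
    (S : nat -> bool) (y : nat -> R) (w : nat) (m : R) : Prop :=
  (m = 0 \/ passive_below n adj ord S y w m) /\
  forall theta, passive_below n adj ord S y w theta -> theta <= m.

Definition indic (b : R) (x : R) : R := if Rlt_dec b x then 1 else 0.

(* Main.v *)
Require Import Defs.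
From Stdlib Require Import Reals List Sorted Lia Lra Permutation Arith RList ZArith.
From Coquelicot Require Coquelicot.
Import ListNotations.
Open Scope R_scope.

Definition Riemann_integrable_const (c a b : R) : Riemann_integrable (fun _ : R => c) a b := RiemannInt_P14 a b c.
Lemma RiemannInt_const (c a b : R) (pr : Riemann_integrable (fun _ : R => c) a b) : RiemannInt pr = c * (b - a).
Proof. exact (RiemannInt_P15 pr). Qed.


Definition ltk (y : nat -> R) (a b : nat) : Prop :=
  y a < y b \/ (y a = y b /\ (a < b)%nat).

Lemma ltk_irrefl y a : ~ ltk y a a.
Proof. unfold ltk; intros [H|[_ H]]; [lra|lia]. Qed.

Lemma ltk_trans y a b c : ltk y a b -> ltk y b c -> ltk y a c.
Proof. unfold ltk; intros [H|[H1 H2]] [H'|[H1' H2']]; try (left; lra); right; split; [lra|lia]. Qed.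

Lemma ltk_asym y a b : ltk y a b -> ltk y b a -> False.
Proof. intros H1 H2; exact (ltk_irrefl y a (ltk_trans _ _ _ _ H1 H2)). Qed.

Lemma ltk_total y a b : a <> b -> ltk y a b \/ ltk y b a.
Proof.
  unfold ltk; intros H; destruct (Rtotal_order (y a) (y b)) as [h|[h|h]].
  - left; left; exact h.
  - destruct (Nat.lt_total a b) as [h'|[h'|h']]; [left;right;auto|contradiction|right;right;auto].
  - right; left; exact h.
Qed.

Lemma argmin_spec y : forall l best V,
  In best V -> (forall z, In z V -> z = best \/ ltk y best z) ->
  (forall a b, In a V -> In b l -> (a < b)%nat) -> StronglySorted lt l ->
  In (argmin y best l) (V ++ l) /\
  forall z, In z (V ++ l) -> z = argmin y best l \/ ltk y (argmin y best l) z.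
Proof.
  induction l as [|x l IH]; intros best V Hb Hmin Hord Hs.
  - simpl; rewrite app_nil_r; split; auto.
  - inversion Hs as [|? ? Hs' Hall]; subst.
    assert (Hx : forall a, In a V -> (a < x)%nat) by (intros; apply Hord; simpl; auto).
    assert (Hxl : forall b, In b l -> (x < b)%nat).
    { intros b Hb'. rewrite Forall_forall in Hall. apply Hall; auto. }
    replace (V ++ x :: l) with ((V ++ [x]) ++ l) by (rewrite <- app_assoc; reflexivity).
    simpl. destruct (Rlt_dec (y x) (y best)) as [Hlt|Hge].
    + apply IH; auto.
      * apply in_or_app; right; simpl; auto.
      * intros z Hz; apply in_app_or in Hz; destruct Hz as [Hz|[Hz|[]]].
        -- right. destruct (Hmin z Hz) as [->|Hbz]. left; exact Hlt.
           apply ltk_trans with best; [left; exact Hlt|exact Hbz].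
        -- left; auto.
      * intros a b Ha Hb'. apply in_app_or in Ha; destruct Ha as [Ha|[Ha|[]]].
        -- apply Nat.lt_trans with x; auto.
        -- subst; auto.
    + apply IH; auto.
      * apply in_or_app; left; auto.
      * intros z Hz; apply in_app_or in Hz; destruct Hz as [Hz|[Hz|[]]]; auto.
        subst. right. unfold ltk. destruct (Rle_lt_or_eq_dec (y best) (y z)) as [h|h].
        lra. left; auto. right; split; auto.
      * intros a b Ha Hb'. apply in_app_or in Ha; destruct Ha as [Ha|[Ha|[]]].
        -- apply Nat.lt_trans with x; auto.
        -- subst; auto.
Qed.

Lemma filter_seq_sorted f : forall k a, StronglySorted lt (filter f (seq a k)).
Proof.
  induction k; intros a; simpl. constructor.
  destruct (f a); auto. constructor; auto.
  rewrite Forall_forall; intros z Hz. apply filter_In in Hz. destruct Hz as [Hz _]. apply in_seq in Hz. lia.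
Qed.

Definition cand n (adj : nat -> nat -> bool) (S : nat -> bool) (M : list (nat*nat)) w z : Prop :=
  (z < n)%nat /\ S z = true /\ adj w z = true /\ matchedb M z = false.

Definition kmin n adj S M w y m : Prop :=
  cand n adj S M w m /\ forall z, cand n adj S M w z -> z = m \/ ltk y m z.

Lemma cand_filter n adj S M w z :
  In z (filter (fun x => andb (andb (S x) (adj w x)) (negb (matchedb M x))) (seq 0 n)) <-> cand n adj S M w z.
Proof.
  rewrite filter_In, in_seq. unfold cand.
  destruct (S z), (adj w z), (matchedb M z); simpl; intuition (try lia; try discriminate).
Qed.

Lemma step_spec n adj S y M w :
  (andb (S w) (negb (matchedb M w)) = false /\ ranking_step n adj S y M w = M) \/
  (andb (S w) (negb (matchedb M w)) = true /\ (forall z, ~ cand n adj S M w z) /\ ranking_step n adj S y M w = M) \/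
  (andb (S w) (negb (matchedb M w)) = true /\ exists m, kmin n adj S M w y m /\ ranking_step n adj S y M w = (w,m)::M).
Proof.
  unfold ranking_step. destruct (andb (S w) (negb (matchedb M w))) eqn:E; [right|left; auto].
  remember (filter (fun x => andb (andb (S x) (adj w x)) (negb (matchedb M x))) (seq 0 n)) as L eqn:HL.
  pose proof (filter_seq_sorted (fun x => andb (andb (S x) (adj w x)) (negb (matchedb M x))) n 0) as Hs.
  rewrite <- HL in Hs.
  destruct L as [|c cs].
  - left; split; auto; split; auto. intros z Hz; apply cand_filter in Hz; rewrite <- HL in Hz; destruct Hz.
  - right; split; auto. exists (argmin y c cs); split; auto.
    inversion Hs as [|? ? Hs' Hall]; subst.
    destruct (argmin_spec y cs c [c]) as [H1 H2]; simpl; auto.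
    + intros z [->|[]]; auto.
    + intros a b [<-|[]] Hb. rewrite Forall_forall in Hall; auto.
    + split.
      * apply cand_filter. rewrite <- HL. exact H1.
      * intros z Hz. apply cand_filter in Hz. rewrite <- HL in Hz. apply H2. exact Hz.
Qed.

Lemma kmin_unique n adj S S' M M' w w' y y' m m' :
  kmin n adj S M w y m -> kmin n adj S' M' w' y' m' ->
  cand n adj S M w m' -> cand n adj S' M' w' m ->
  (ltk y m m' <-> ltk y' m m') -> (ltk y m' m <-> ltk y' m' m) -> m = m'.
Proof.
  intros [_ H1] [_ H2] c1 c2 e1 e2.
  destruct (H1 m' c1) as [->|h1]; auto.
  destruct (H2 m c2) as [->|h2]; auto.
  exfalso. apply e2 in h2. exact (ltk_asym y _ _ h1 h2).
Qed.


Definition flat (M : list (nat*nat)) : list nat := flat_map (fun p => [fst p; snd p]) M.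

Lemma matchedb_flat M x : matchedb M x = true <-> In x (flat M).
Proof.
  unfold matchedb, flat. rewrite existsb_exists, in_flat_map. split.
  - intros [p [Hp Hx]]. exists p; split; auto. apply Bool.orb_true_iff in Hx.
    destruct Hx as [Hx|Hx]; apply Nat.eqb_eq in Hx; simpl; auto.
  - intros [p [Hp Hx]]. exists p; split; auto. simpl in Hx.
    destruct Hx as [<-|[<-|[]]]; rewrite Nat.eqb_refl; auto using Bool.orb_true_r.
Qed.

Lemma matchedb_false M x : matchedb M x = false <-> ~ In x (flat M).
Proof. rewrite <- matchedb_flat. destruct (matchedb M x); split; intros H; try discriminate; auto; exfalso; apply H; auto. Qed.

Lemma passive_iff M w : passive M w <-> exists a, In (a,w) M.
Proof.
  unfold passive. rewrite existsb_exists. split.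
  - intros [[a b] [H1 H2]]. simpl in H2. apply Nat.eqb_eq in H2; subst. eauto.
  - intros [a H]. exists (a,w); simpl; rewrite Nat.eqb_refl; auto.
Qed.

Lemma flat_cons a b M : flat ((a,b)::M) = a :: b :: flat M.
Proof. reflexivity. Qed.

Lemma in_flat_pair a b M : In (a,b) M -> In a (flat M) /\ In b (flat M).
Proof. intros H. unfold flat; split; apply in_flat_map; exists (a,b); simpl; auto. Qed.

Lemma step_cases n adj S y M w :
  ranking_step n adj S y M w = M \/
  exists m, kmin n adj S M w y m /\ S w = true /\ matchedb M w = false /\
            ranking_step n adj S y M w = (w,m)::M.
Proof.
  destruct (step_spec n adj S y M w) as [[_ H]|[[_ [_ H]]|[E [m [Hm H]]]]]; auto.
  right. exists m. apply Bool.andb_true_iff in E. destruct E as [E1 E2].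
  apply Bool.negb_true_iff in E2. auto.
Qed.

Lemma fold_persist n adj S y : forall l M p, In p M -> In p (fold_left (ranking_step n adj S y) l M).
Proof.
  induction l as [|w l IH]; intros M p H; simpl; auto. apply IH.
  destruct (step_cases n adj S y M w) as [->|[m [_ [_ [_ ->]]]]]; simpl; auto.
Qed.

Lemma fold_passive n adj S y l M x : passive M x -> passive (fold_left (ranking_step n adj S y) l M) x.
Proof. rewrite !passive_iff. intros [a H]. exists a. apply fold_persist; auto. Qed.

Lemma fold_matched n adj S y l M x : matchedb M x = true -> matchedb (fold_left (ranking_step n adj S y) l M) x = true.
Proof.
  rewrite !matchedb_flat. unfold flat. rewrite !in_flat_map. intros [p [Hp Hx]].
  exists p; split; auto. apply fold_persist; auto.
Qed.

Lemma fold_fst n adj S y : forall l M p, In p (fold_left (ranking_step n adj S y) l M) -> In p M \/ In (fst p) l.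
Proof.
  induction l as [|w l IH]; intros M p H; simpl in *; auto.
  destruct (IH _ _ H) as [H1|H1]; auto.
  destruct (step_cases n adj S y M w) as [E|[m [_ [_ [_ E]]]]]; rewrite E in H1; auto.
  destruct H1 as [<-|H1]; simpl; auto.
Qed.

Definition valid n S M := NoDup (flat M) /\ forall x, In x (flat M) -> (x < n)%nat /\ S x = true.

Lemma step_valid n adj S y M w : (forall a, adj a a = false) -> (w < n)%nat ->
  valid n S M -> valid n S (ranking_step n adj S y M w).
Proof.
  intros Hirr Hw [H1 H2].
  destruct (step_cases n adj S y M w) as [->|[m [[[Hmn [HSm [Hadj Hmm]]] _] [HSw [Hmw ->]]]]]; [split; auto|].
  rewrite matchedb_false in Hmm, Hmw. unfold valid; rewrite flat_cons. split.
  - constructor. intros [E|E]; [subst; rewrite Hirr in Hadj; discriminate | contradiction].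
    constructor; auto.
  - intros x [<-|[<-|Hx]]; auto.
Qed.

Lemma fold_valid n adj S y : (forall a, adj a a = false) -> forall l M,
  (forall w, In w l -> (w < n)%nat) -> valid n S M ->
  valid n S (fold_left (ranking_step n adj S y) l M).
Proof.
  intros Hirr; induction l as [|w l IH]; intros M Hl HM; simpl; auto.
  apply IH; [intros; apply Hl; simpl; auto|]. apply step_valid; auto. apply Hl; simpl; auto.
Qed.

Lemma valid_nil n S : valid n S [].
Proof. split; [constructor| intros x []]. Qed.

Lemma find_fst_pair M a b : NoDup (flat M) -> In (a,b) M ->
  find (fun p => Nat.eqb (fst p) a) M = Some (a,b).
Proof.
  induction M as [|[c d] M IH]; intros Hnd H; [destruct H|].
  rewrite flat_cons in Hnd. inversion Hnd as [|? ? Hc Hnd']; subst. inversion Hnd' as [|? ? Hd Hnd'']; subst.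
  simpl. destruct H as [H|H].
  - inversion H; subst. rewrite Nat.eqb_refl; auto.
  - destruct (Nat.eqb_spec c a) as [->|Hne].
    + exfalso. apply Hc. right. apply (in_flat_pair _ _ _ H).
    + apply IH; auto.
Qed.

Lemma find_none_intro {A} (f : A -> bool) l : (forall x, In x l -> f x = false) -> find f l = None.
Proof. induction l as [|x l IH]; intros H; simpl; auto. rewrite H; simpl; auto. apply IH; intros; apply H; simpl; auto. Qed.

Lemma find_fst_none M b : ~ In b (flat M) -> find (fun p => Nat.eqb (fst p) b) M = None.
Proof.
  intros H. apply find_none_intro. intros [c d] Hp. simpl. apply Nat.eqb_neq. intros ->.
  apply H. apply (in_flat_pair _ _ _ Hp).
Qed.

Lemma find_snd_none M b : ~ In b (flat M) -> find (fun p => Nat.eqb (snd p) b) M = None.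
Proof.
  intros H. apply find_none_intro. intros [c d] Hp. simpl. apply Nat.eqb_neq. intros ->.
  apply H. apply (in_flat_pair _ _ _ Hp).
Qed.

Lemma find_snd_pair M a b : NoDup (flat M) -> In (a,b) M ->
  find (fun p => Nat.eqb (fst p) b) M = None /\ find (fun p => Nat.eqb (snd p) b) M = Some (a,b).
Proof.
  induction M as [|[c d] M IH]; intros Hnd H; [destruct H|].
  rewrite flat_cons in Hnd. inversion Hnd as [|? ? Hc Hnd']; subst. inversion Hnd' as [|? ? Hd Hnd'']; subst.
  simpl. destruct H as [H|H].
  - inversion H; subst. rewrite Nat.eqb_refl.
    destruct (Nat.eqb_spec a b) as [->|_]. exfalso; apply Hc; simpl; auto.
    split; auto. apply find_fst_none; auto.
  - destruct (in_flat_pair _ _ _ H) as [Ha Hb].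
    destruct (Nat.eqb_spec c b) as [->|_]. exfalso; apply Hc; right; auto.
    destruct (Nat.eqb_spec d b) as [->|_]. contradiction.
    apply IH; auto.
Qed.

Lemma alpha_pair g z M a b : NoDup (flat M) -> In (a,b) M ->
  alpha g z M a = 1 - g (z b) /\ alpha g z M b = g (z b).
Proof.
  intros Hnd H. unfold alpha. rewrite (find_fst_pair M a b Hnd H).
  destruct (find_snd_pair M a b Hnd H) as [-> ->]. auto.
Qed.

Lemma alpha_unm g z M x : matchedb M x = false -> alpha g z M x = 0.
Proof.
  intros H. apply matchedb_false in H. unfold alpha.
  rewrite find_fst_none, find_snd_none; auto.
Qed.

Lemma alpha_nonneg g z M w : (forall x, 0 <= x <= 1 -> 0 <= g x <= 1) ->
  (forall x, In x (flat M) -> 0 <= z x <= 1) -> 0 <= z w <= 1 -> 0 <= alpha g z M w.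
Proof.
  intros Hg Hz Hw. unfold alpha.
  destruct (find (fun p => Nat.eqb (fst p) w) M) as [[a b]|] eqn:E1.
  - apply find_some in E1. destruct E1 as [E1 _]. apply in_flat_pair in E1.
    pose proof (Hg _ (Hz _ (proj2 E1))). lra.
  - destruct (find (fun p => Nat.eqb (snd p) w) M); [apply Hg; auto|lra].
Qed.

Lemma alpha_le1 g z M w : (forall x, 0 <= x <= 1 -> 0 <= g x <= 1) ->
  (forall x, In x (flat M) -> 0 <= z x <= 1) -> 0 <= z w <= 1 -> alpha g z M w <= 1.
Proof.
  intros Hg Hz Hw. unfold alpha.
  destruct (find (fun p => Nat.eqb (fst p) w) M) as [[a b]|] eqn:E1.
  - apply find_some in E1. destruct E1 as [E1 _]. apply in_flat_pair in E1.
    pose proof (Hg _ (Hz _ (proj2 E1))). lra.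
  - destruct (find (fun p => Nat.eqb (snd p) w) M); [apply Hg; auto|lra].
Qed.


Lemma upd_eq y w t : upd y w t w = t.
Proof. unfold upd; rewrite Nat.eqb_refl; auto. Qed.
Lemma upd_neq y w t x : x <> w -> upd y w t x = y x.
Proof. intros H; unfold upd; apply Nat.eqb_neq in H; rewrite H; auto. Qed.

Lemma ltk_agree y y' a b : y a = y' a -> y b = y' b -> (ltk y a b <-> ltk y' a b).
Proof. unfold ltk; intros -> ->; tauto. Qed.

Lemma step_ext n adj S y y' M w :
  (forall a b, cand n adj S M w a -> cand n adj S M w b -> (ltk y a b <-> ltk y' a b)) ->
  ranking_step n adj S y M w = ranking_step n adj S y' M w.
Proof.
  intros H.
  destruct (step_spec n adj S y M w) as [[E1 H1]|[[E1 [N1 H1]]|[E1 [m [Hm H1]]]]];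
  destruct (step_spec n adj S y' M w) as [[E2 H2]|[[E2 [N2 H2]]|[E2 [m' [Hm' H2]]]]];
  rewrite H1, H2; auto; try congruence.
  - exfalso; apply N1 with m'; apply Hm'.
  - exfalso; apply N2 with m; apply Hm.
  - f_equal; f_equal. apply (kmin_unique n adj S S M M w w y y' m m'); auto.
    apply Hm'. apply Hm. apply H; [apply Hm|apply Hm']. apply H; [apply Hm'|apply Hm].
Qed.

Lemma fold_ext n adj S y y' : forall l M,
  (forall a b, (a < n)%nat -> (b < n)%nat -> S a = true -> S b = true -> (ltk y a b <-> ltk y' a b)) ->
  fold_left (ranking_step n adj S y) l M = fold_left (ranking_step n adj S y') l M.
Proof.
  induction l as [|w l IH]; intros M H; simpl; auto.
  rewrite (step_ext n adj S y y'); auto.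
  intros a b [? [? _]] [? [? _]]; auto.
Qed.

Lemma fold_ext_S n adj S y y' l M :
  (forall x, S x = true -> y x = y' x) ->
  fold_left (ranking_step n adj S y) l M = fold_left (ranking_step n adj S y') l M.
Proof. intros H. apply fold_ext. intros; apply ltk_agree; auto. Qed.

Lemma cand_conv n adj S S' M w x z : (forall z, z <> x -> S' z = S z) -> z <> x ->
  (cand n adj S' M w z <-> cand n adj S M w z).
Proof. intros H Hz. unfold cand. rewrite H; tauto. Qed.

Lemma BS n adj S S' y M w x : (forall z, z <> x -> S' z = S z) -> S x = false -> w <> x ->
  ranking_step n adj S' y M w = ranking_step n adj S y M w \/ ranking_step n adj S' y M w = (w,x)::M.
Proof.
  intros HS Hx Hw.
  assert (HSc : forall z, cand n adj S M w z -> z <> x) by (intros z [_ [h _]] ->; congruence).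
  destruct (step_spec n adj S' y M w) as [[E1 H1]|[[E1 [N1 H1]]|[E1 [m [Hm H1]]]]];
  destruct (step_spec n adj S y M w) as [[E2 H2]|[[E2 [N2 H2]]|[E2 [m' [Hm' H2]]]]];
  rewrite H1, H2; auto; try (rewrite HS in E1 by auto; congruence).
  - exfalso. apply N1 with m'. pose proof (proj1 Hm') as Hc.
    apply (cand_conv n adj S S' M w x m' HS (HSc _ Hc)). exact Hc.
  - destruct (Nat.eq_dec m x) as [->|Hne]; auto. exfalso. apply N2 with m.
    apply (cand_conv n adj S S' M w x m HS Hne). apply Hm.
  - destruct (Nat.eq_dec m x) as [->|Hne]; auto. left. f_equal; f_equal.
    apply (kmin_unique n adj S' S M M w w y y m m'); auto; try tauto.
    + pose proof (proj1 Hm') as Hc. apply (cand_conv n adj S S' M w x m' HS (HSc _ Hc)). exact Hc.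
    + apply (cand_conv n adj S S' M w x m HS Hne). apply Hm.
Qed.

Lemma valid_notin n S M x : valid n S M -> S x = false -> ~ In x (flat M).
Proof. intros [_ H] Hx Hin. destruct (H x Hin). congruence. Qed.

Lemma coin1 n adj S S' y x (Hirr : forall a, adj a a = false) :
  (forall z, z <> x -> S' z = S z) -> S x = false ->
  forall l M, ~ In x l -> (forall w, In w l -> (w < n)%nat) -> valid n S M ->
  passive (fold_left (ranking_step n adj S' y) l M) x \/
  fold_left (ranking_step n adj S' y) l M = fold_left (ranking_step n adj S y) l M.
Proof.
  intros HS Hx. induction l as [|w l IH]; intros M Hl Hn HM; simpl; auto.
  assert (Hw : w <> x) by (intros ->; apply Hl; simpl; auto).
  destruct (BS n adj S S' y M w x HS Hx Hw) as [E|E]; rewrite E.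
  - apply IH; auto. intros H; apply Hl; simpl; auto. intros; apply Hn; simpl; auto.
    apply step_valid; auto. apply Hn; simpl; auto.
  - left. apply fold_passive. apply passive_iff. exists w; simpl; auto.
Qed.

Lemma minus1_neq v z : z <> v -> minus1 v z = true.
Proof. intros H. unfold minus1. apply Nat.eqb_neq in H. rewrite H; auto. Qed.
Lemma minus1_self v : minus1 v v = false.
Proof. unfold minus1. rewrite Nat.eqb_refl; auto. Qed.

Lemma triple n adj y u v (Hirr : forall a, adj a a = false) : u <> v ->
  forall l M, ~ In u l -> ~ In v l -> (forall w, In w l -> (w < n)%nat) ->
  valid n (minus1 v) M -> valid n (minus1 u) M ->
  ~ passive (fold_left (ranking_step n adj (minus1 v) y) l M) u ->
  ~ passive (fold_left (ranking_step n adj (minus1 u) y) l M) v ->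
  fold_left (ranking_step n adj allv y) l M = fold_left (ranking_step n adj (minus1 v) y) l M /\
  fold_left (ranking_step n adj allv y) l M = fold_left (ranking_step n adj (minus1 u) y) l M.
Proof.
  intros Huv. induction l as [|w l IH]; intros M Hu Hv Hn HM1 HM2 N1 N2; simpl in *; auto.
  assert (Hwu : w <> u) by auto. assert (Hwv : w <> v) by auto.
  assert (HSv : forall z, z <> v -> allv z = minus1 v z) by (intros; rewrite minus1_neq; auto).
  assert (HSu : forall z, z <> u -> allv z = minus1 u z) by (intros; rewrite minus1_neq; auto).
  destruct (BS n adj (minus1 v) allv y M w v HSv (minus1_self v) Hwv) as [E1|E1];
  destruct (BS n adj (minus1 u) allv y M w u HSu (minus1_self u) Hwu) as [E2|E2].
  - rewrite <- E1 in N1. rewrite <- E2 in N2. rewrite <- E1, <- E2. apply IH; auto.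
    + rewrite E1. apply step_valid; auto.
    + rewrite E2. apply step_valid; auto.
  - exfalso. apply N1. rewrite <- E1, E2. apply fold_passive, passive_iff. exists w; simpl; auto.
  - exfalso. apply N2. rewrite <- E2, E1. apply fold_passive, passive_iff. exists w; simpl; auto.
  - rewrite E1 in E2. inversion E2. congruence.
Qed.

Lemma DU n adj y M u v : u <> v -> (v < n)%nat -> adj u v = true ->
  valid n (minus1 v) M -> matchedb M u = false ->
  exists r, ranking_step n adj allv y M u = (u,r)::M /\
    kmin n adj allv M u y r /\
    (r = v \/ (kmin n adj (minus1 v) M u y r /\ ltk y r v)).
Proof.
  intros Huv Hv Hadj HM Hu.
  assert (Hvc : cand n adj allv M u v).
  { repeat split; auto. apply matchedb_false. apply (valid_notin n (minus1 v)); auto. apply minus1_self. }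
  destruct (step_spec n adj allv y M u) as [[E1 H1]|[[E1 [N1 H1]]|[E1 [m [Hm H1]]]]].
  - rewrite Hu in E1; discriminate.
  - exfalso; apply (N1 v Hvc).
  - exists m; split; auto. split; auto. destruct (Nat.eq_dec m v) as [->|Hne]; auto. right.
    destruct Hm as [[Hm1 [_ [Hm3 Hm4]]] Hmin]. split.
    + split. repeat split; auto. apply minus1_neq; auto.
      intros z [Hz1 [Hz2 [Hz3 Hz4]]]. apply Hmin. repeat split; auto.
    + destruct (Hmin v Hvc) as [->|h]; [congruence|auto].
Qed.

Definition DMinv (x : nat) (A B : list (nat*nat)) : Prop :=
  passive A x \/ (A = B /\ ~ passive B x) \/ (matchedb B x = true /\ ~ passive B x).

Lemma step_keeps_notpassive n adj S y M w x : matchedb M x = true -> ~ passive M x ->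
  matchedb (ranking_step n adj S y M w) x = true /\ ~ passive (ranking_step n adj S y M w) x.
Proof.
  intros H1 H2. destruct (step_cases n adj S y M w) as [->|[m [[[_ [_ [_ Hm]]] _] [_ [_ ->]]]]]; auto.
  split.
  - apply matchedb_flat; rewrite flat_cons; simpl; right; right; apply matchedb_flat; auto.
  - rewrite passive_iff. intros [a [E|E]].
    + inversion E; subst. congruence.
    + apply H2, passive_iff; eauto.
Qed.

Lemma DM_step n adj S y x s s' M1 M2 w : s' < s -> DMinv x M1 M2 ->
  DMinv x (ranking_step n adj S (upd y x s') M1 w) (ranking_step n adj S (upd y x s) M2 w).
Proof.
  intros Hss [H|[[-> H]|[H1 H2]]].
  - left. apply (fold_passive n adj S (upd y x s') [w]) in H. exact H.
  - destruct (matchedb M2 x) eqn:Em.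
    + right; right. apply step_keeps_notpassive; auto.
    + assert (HI : DMinv x M2 M2) by (right; left; auto).
      destruct (step_spec n adj S (upd y x s') M2 w) as [[E1 H1]|[[E1 [N1 H1]]|[E1 [m' [Hm' H1]]]]];
      destruct (step_spec n adj S (upd y x s) M2 w) as [[E2 H2]|[[E2 [N2 H2]]|[E2 [m [Hm H2]]]]];
      rewrite H1, H2; try (exfalso; congruence).
      * exact HI.
      * exact HI.
      * exfalso; apply N1 with m; apply Hm.
      * exfalso; apply N2 with m'; apply Hm'.
      * destruct (Nat.eq_dec m' x) as [->|Hm'x].
        { left. apply passive_iff. exists w; simpl; auto. }
        destruct (Nat.eq_dec m x) as [->|Hmx].
        { exfalso. destruct Hm as [Hc Hmin]. destruct Hm' as [Hc' Hmin'].
          destruct (Hmin m' Hc') as [h|h]; [congruence|].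
          destruct (Hmin' x Hc) as [h'|h']; [congruence|].
          unfold ltk in h, h'. rewrite upd_eq, upd_neq in h by auto. rewrite upd_eq, upd_neq in h' by auto.
          destruct h as [h|[h _]]; destruct h' as [h'|[h' _]]; lra. }
        assert (m = m').
        { apply (kmin_unique n adj S S M2 M2 w w (upd y x s) (upd y x s') m m'); auto.
          apply Hm'. apply Hm. apply ltk_agree; rewrite !upd_neq; auto.
          apply ltk_agree; rewrite !upd_neq; auto. }
        subst. right; left; split; auto.
        rewrite passive_iff. intros [a [E|E]]. inversion E; congruence. apply H, passive_iff; eauto.
  - right; right. apply step_keeps_notpassive; auto.
Qed.

Lemma DM n adj ord S y x s s' : s' < s ->
  passive (ranking n adj ord S (upd y x s)) x -> passive (ranking n adj ord S (upd y x s')) x.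
Proof.
  intros Hss. unfold ranking.
  assert (forall l M1 M2, DMinv x M1 M2 ->
    DMinv x (fold_left (ranking_step n adj S (upd y x s')) l M1) (fold_left (ranking_step n adj S (upd y x s)) l M2)).
  { induction l as [|w l IH]; intros M1 M2 H; simpl; auto. apply IH. apply DM_step; auto. }
  assert (H0 : DMinv x [] []). { right; left; split; [reflexivity|]. rewrite passive_iff; intros [a []]. }
  intros Hp. destruct (H ord _ _ H0) as [h|[[_ h]|[_ h]]]; auto; contradiction.
Qed.

Lemma DMle n adj ord S y x s s' : s' <= s ->
  passive (ranking n adj ord S (upd y x s)) x -> passive (ranking n adj ord S (upd y x s')) x.
Proof. intros [h|h]; [apply DM; auto|subst; auto]. Qed.

Lemma marg_range n adj ord S y x m : is_marginal_rank n adj ord S y x m -> 0 <= m <= 1.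
Proof. intros [[->|[h _]] _]; lra. Qed.

Lemma NPA n adj ord S y x m s : is_marginal_rank n adj ord S y x m -> m < s -> s <= 1 ->
  ~ passive (ranking n adj ord S (upd y x s)) x.
Proof.
  intros Hm Hms Hs1 Hp. pose proof (marg_range _ _ _ _ _ _ _ Hm).
  assert (passive_below n adj ord S y x s).
  { split. lra. exists s; split. lra. intros t Ht _. apply DM with s; [lra|auto]. }
  destruct Hm as [_ Hm]. apply Hm in H0. lra.
Qed.

Lemma PBM n adj ord S y x m t : is_marginal_rank n adj ord S y x m -> 0 <= t < m ->
  passive (ranking n adj ord S (upd y x t)) x.
Proof.
  intros [[->|[Hm1 [eps [He Hp]]]] _] Ht; [lra|].
  set (t' := Rmax t (m - eps/2)).
  assert (Hp' : passive (ranking n adj ord S (upd y x t')) x).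
  { apply Hp; unfold t'. split. apply Rlt_le_trans with (m - eps/2). lra. apply Rmax_r.
    apply Rmax_lub_lt; lra. apply Rle_trans with t; [lra|apply Rmax_l]. }
  apply DMle with t'; auto. apply Rmax_l.
Qed.

Lemma MLB n adj ord S y x m c : is_marginal_rank n adj ord S y x m -> 0 < c <= 1 ->
  (forall t, 0 <= t < c -> passive (ranking n adj ord S (upd y x t)) x) -> c <= m.
Proof.
  intros [_ Hm] Hc H. apply Hm. split; auto. exists c; split. lra.
  intros t Ht Ht0. apply H; lra.
Qed.


Definition InvB n (side : nat -> bool) v MR MP : Prop :=
  (forall a, (a < n)%nat -> side a = side v -> a <> v -> matchedb MP a = false -> matchedb MR a = false) /\
  (forall b, (b < n)%nat -> side b <> side v -> matchedb MR b = false -> matchedb MP b = false).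

Lemma bool3 (a b c : bool) : a <> b -> b <> c -> a = c.
Proof. destruct a, b, c; congruence. Qed.

Lemma unm_cons a b M x : matchedb ((a,b)::M) x = false <-> x <> a /\ x <> b /\ matchedb M x = false.
Proof.
  rewrite !matchedb_false, flat_cons. simpl. split.
  - intros H; repeat split; intros h; apply H; auto.
  - intros [h1 [h2 h3]] [h|[h|h]]; auto.
Qed.

Lemma InvB_step n adj side y v MR MP w :
  (forall a b, (a < n)%nat -> (b < n)%nat -> adj a b = true -> side a <> side b) ->
  (w < n)%nat -> w <> v -> InvB n side v MR MP ->
  InvB n side v (ranking_step n adj allv y MR w) (ranking_step n adj (minus1 v) y MP w).
Proof.
  intros Hbip Hw Hwv [IA IB].
  assert (HI : InvB n side v MR MP) by (split; auto).
  destruct (step_spec n adj allv y MR w) as [[E1 H1]|[[E1 [N1 H1]]|[E1 [r [Hr H1]]]]];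
  destruct (step_spec n adj (minus1 v) y MP w) as [[E2 H2]|[[E2 [N2 H2]]|[E2 [p [Hp H2]]]]];
  rewrite H1, H2; auto;
  unfold allv in E1; rewrite minus1_neq in E2 by auto; simpl in E1, E2;
  (first [apply (proj1 (Bool.negb_false_iff _)) in E1 | apply (proj1 (Bool.negb_true_iff _)) in E1]);
  (first [apply (proj1 (Bool.negb_false_iff _)) in E2 | apply (proj1 (Bool.negb_true_iff _)) in E2]).
  -
    destruct Hp as [[Hp1 [Hp2 [Hp3 Hp4]]] Hpm].
    assert (Hsw : side w <> side v).
    { intros h. rewrite (IA w Hw h Hwv E2) in E1. discriminate. }
    assert (Hsp : side p = side v) by (apply bool3 with (side w); auto; intros h; apply (Hbip w p); auto).
    split.
    + intros a Ha Hs Hav Hu. apply unm_cons in Hu. apply IA; tauto.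
    + intros b Hb Hs Hu. apply unm_cons. repeat split.
      * intros ->; congruence.
      * intros ->; congruence.
      * apply IB; auto.
  -
    destruct Hp as [[Hp1 [Hp2 [Hp3 Hp4]]] Hpm].
    assert (Hsw : side w = side v).
    { destruct (Bool.bool_dec (side w) (side v)) as [h|h]; auto. exfalso.
      apply (N1 p). repeat split; auto. apply IA; auto.
      apply bool3 with (side w); auto. intros h'; apply (Hbip w p); auto.
      intros ->. rewrite minus1_self in Hp2; discriminate. }
    split.
    + intros a Ha Hs Hav Hu. apply unm_cons in Hu. apply IA; tauto.
    + intros b Hb Hs Hu. apply unm_cons. repeat split.
      * intros ->; congruence.
      * intros ->. apply (N1 p). repeat split; auto.
      * apply IB; auto.
  -
    destruct Hr as [[Hr1 [Hr2 [Hr3 Hr4]]] Hrm].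
    assert (Hsw : side w = side v).
    { destruct (Bool.bool_dec (side w) (side v)) as [h|h]; auto.
      rewrite (IB w Hw h E1) in E2. discriminate. }
    split.
    + intros a Ha Hs Hav Hu. apply unm_cons. repeat split.
      * intros ->; congruence.
      * intros ->. apply (Hbip w r); auto. congruence.
      * apply IA; auto.
    + intros b Hb Hs Hu. apply unm_cons in Hu. apply IB; tauto.
  -
    destruct Hr as [[Hr1 [Hr2 [Hr3 Hr4]]] Hrm].
    assert (Hsw : side w <> side v).
    { intros h. apply (N2 r). repeat split; auto.
      apply minus1_neq. intros ->. apply (Hbip w v); auto. 
      apply IB; auto. intros h'. apply (Hbip w r); auto. congruence. }
    assert (Hsr : side r = side v) by (apply bool3 with (side w); auto; intros h; apply (Hbip w r); auto).
    split.
    + intros a Ha Hs Hav Hu. apply unm_cons. repeat split.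
      * intros ->; congruence.
      * intros ->. apply (N2 r). repeat split; auto. apply minus1_neq; auto.
      * apply IA; auto.
    + intros b Hb Hs Hu. apply unm_cons in Hu. apply IB; tauto.
  -
    pose proof Hr as Hr'; destruct Hr' as [[Hr1 [Hr2 [Hr3 Hr4]]] Hrm].
    pose proof Hp as Hp'; destruct Hp' as [[Hp1 [Hp2 [Hp3 Hp4]]] Hpm].
    assert (Hpv : p <> v) by (intros ->; rewrite minus1_self in Hp2; discriminate).
    destruct (Bool.bool_dec (side w) (side v)) as [Hsw|Hsw].
    + assert (Hsr : side r <> side v) by (intros h; apply (Hbip w r); auto; congruence).
      assert (Hsp : side p <> side v) by (intros h; apply (Hbip w p); auto; congruence).
      split.
      * intros a Ha Hs Hav Hu. apply unm_cons in Hu. destruct Hu as [h1 [h2 h3]].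
        apply unm_cons. split; [|split].
        -- exact h1.
        -- intros ->; congruence.
        -- apply IA; auto.
      * intros b Hb Hs Hu. apply unm_cons in Hu. destruct Hu as [h1 [h2 h3]].
        apply unm_cons. split; [|split].
        -- exact h1.
        -- intros ->. apply h2. symmetry.
           assert (Hrv : r <> v) by (intros ->; congruence).
           apply (kmin_unique n adj allv (minus1 v) MR MP w w y y r p Hr Hp); try tauto.
           ++ split; [exact Hp1|split; [reflexivity|split; [exact Hp3|exact h3]]].
           ++ split; [exact Hr1|split; [apply minus1_neq; exact Hrv|split; [exact Hr3|apply IB; auto]]].
        -- apply IB; auto.
    + assert (Hsr : side r = side v) by (apply bool3 with (side w); auto; intros h; apply (Hbip w r); auto).
      assert (Hsp : side p = side v) by (apply bool3 with (side w); auto; intros h; apply (Hbip w p); auto).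
      split.
      * intros a Ha Hs Hav Hu. apply unm_cons in Hu. destruct Hu as [h1 [h2 h3]].
        apply unm_cons. split; [|split].
        -- intros ->; congruence.
        -- intros ->. apply h2.
           apply (kmin_unique n adj allv (minus1 v) MR MP w w y y r p Hr Hp); try tauto.
           ++ split; [exact Hp1|split; [reflexivity|split; [exact Hp3|apply IA; auto]]].
           ++ split; [exact Hr1|split; [apply minus1_neq; exact Hav|split; [exact Hr3|exact h3]]].
        -- apply IA; auto.
      * intros b Hb Hs Hu. apply unm_cons in Hu. destruct Hu as [h1 [h2 h3]].
        apply unm_cons. split; [|split].
        -- exact h1.
        -- intros ->; congruence.
        -- apply IB; auto.
Qed.


Definition zz (y : nat -> R) u yu v t := upd (upd y u yu) v t.

Lemma zz_v y u yu v t : zz y u yu v t v = t.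
Proof. unfold zz; apply upd_eq. Qed.
Lemma zz_u y u yu v t : u <> v -> zz y u yu v t u = yu.
Proof. intros h; unfold zz; rewrite upd_neq, upd_eq; auto. Qed.
Lemma zz_o y u yu v t x : x <> u -> x <> v -> zz y u yu v t x = y x.
Proof. intros h1 h2; unfold zz; rewrite !upd_neq; auto. Qed.
Lemma zz_nv y u yu v t t' x : x <> v -> zz y u yu v t x = zz y u yu v t' x.
Proof. intros h; unfold zz; rewrite (upd_neq _ v t x h), (upd_neq _ v t' x h); auto. Qed.

Lemma zz_range y u yu v t x n : (forall x, (x < n)%nat -> x <> u -> x <> v -> 0 <= y x < 1) ->
  0 <= yu < 1 -> 0 <= t <= 1 -> (x < n)%nat -> 0 <= zz y u yu v t x <= 1.
Proof.
  intros Hy Hyu Ht Hx. destruct (Nat.eq_dec x v) as [->|h1]. rewrite zz_v; lra.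
  destruct (Nat.eq_dec x u) as [->|h2]. unfold zz. rewrite upd_neq, upd_eq by auto. lra.
  rewrite zz_o by auto. pose proof (Hy x Hx h2 h1); lra.
Qed.

Lemma notin_prefix (l1 l2 : list nat) x : NoDup (l1 ++ x :: l2) -> ~ In x l1.
Proof. intros H h. apply (NoDup_remove_2 _ _ _ H). apply in_or_app; auto. Qed.

Lemma TB n adj ord y u v yu theta t l1 rest (Hirr : forall a, adj a a = false) :
  ord = l1 ++ u :: rest -> ~ In v l1 -> (forall w, In w ord -> (w < n)%nat) ->
  u <> v -> (v < n)%nat -> adj u v = true ->
  (forall x, (x < n)%nat -> x <> u -> x <> v -> 0 <= y x < 1) -> 0 <= yu < 1 ->
  is_marginal_rank n adj ord allv (upd y u yu) v theta ->
  matchedb (fold_left (ranking_step n adj (minus1 v) (zz y u yu v t)) l1 []) u = false ->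
  (forall m0, kmin n adj (minus1 v) (fold_left (ranking_step n adj (minus1 v) (zz y u yu v t)) l1 []) u (zz y u yu v t) m0 ->
     zz y u yu v t m0 <= theta) /\
  ((forall q, ~ cand n adj (minus1 v) (fold_left (ranking_step n adj (minus1 v) (zz y u yu v t)) l1 []) u q) -> theta = 1).
Proof.
  intros Hord Hv1 Hn Huv Hv Hadj Hy Hyu Hth Hu.
  set (E0 := fold_left (ranking_step n adj (minus1 v) (zz y u yu v t)) l1 []) in *.
  assert (Hl1 : forall w, In w l1 -> (w < n)%nat) by (intros; apply Hn; rewrite Hord; apply in_or_app; auto).
  assert (HE0 : valid n (minus1 v) E0) by (apply fold_valid; auto; apply valid_nil).
  assert (Key : forall t', (forall r, kmin n adj (minus1 v) E0 u (zz y u yu v t') r -> ltk (zz y u yu v t') r v -> False) ->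
     passive (ranking n adj ord allv (upd (upd y u yu) v t')) v).
  { intros t' Hc. unfold ranking. rewrite Hord, fold_left_app. simpl.
    destruct (coin1 n adj (minus1 v) allv (zz y u yu v t') v Hirr) with (l := l1) (M := @nil (nat*nat))
      as [Hp|Heq]; auto.
    - intros; rewrite minus1_neq; auto.
    - apply minus1_self.
    - apply valid_nil.
    - apply fold_passive. apply (fold_passive n adj allv (zz y u yu v t') [u]) in Hp. exact Hp.
    - fold (zz y u yu v t'). rewrite Heq.
      rewrite (fold_ext_S n adj (minus1 v) (zz y u yu v t') (zz y u yu v t)).
      2:{ intros x Hx. apply zz_nv. intros ->. rewrite minus1_self in Hx; discriminate. }
      fold E0.
      destruct (DU n adj (zz y u yu v t') E0 u v Huv Hv Hadj HE0 Hu) as [r [Er [_ [->|[Hr1 Hr2]]]]].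
      + rewrite Er. apply fold_passive, passive_iff. exists u; simpl; auto.
      + exfalso; apply (Hc r Hr1 Hr2). }
  pose proof (marg_range _ _ _ _ _ _ _ Hth) as Hthr.
  split.
  - intros m0 Hm0.
    assert (Hm0v : m0 <> v) by (intros ->; destruct Hm0 as [[_ [h _]] _]; rewrite minus1_self in h; discriminate).
    assert (Hm0n : (m0 < n)%nat) by apply Hm0.
    pose proof (zz_range y u yu v 0 m0 n Hy Hyu) as Hr.
    rewrite <- (zz_nv y u yu v t 0 m0 Hm0v) in Hr.
    destruct (Rle_lt_dec (zz y u yu v t m0) 0) as [h|h]. lra.
    apply (MLB n adj ord allv (upd y u yu) v theta); auto.
    + split; auto. apply Hr; auto. lra.
    + intros t' Ht'. apply Key. intros r Hr1 Hr2.
      assert (r = m0).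
      { apply (kmin_unique n adj (minus1 v) (minus1 v) E0 E0 u u (zz y u yu v t') (zz y u yu v t) r m0); auto.
        apply Hm0. apply Hr1.
        apply ltk_agree; apply zz_nv; auto. intros ->; destruct Hr1 as [[_ [hh _]] _]; rewrite minus1_self in hh; discriminate.
        apply ltk_agree; apply zz_nv; auto. intros ->; destruct Hr1 as [[_ [hh _]] _]; rewrite minus1_self in hh; discriminate. }
      subst r. unfold ltk in Hr2. rewrite zz_v in Hr2. rewrite (zz_nv y u yu v t' t m0 Hm0v) in Hr2. lra.
  - intros Hno. assert (1 <= theta).
    { apply (MLB n adj ord allv (upd y u yu) v theta); auto. lra.
      intros t' Ht'. apply Key. intros r Hr1 _. apply (Hno r). apply Hr1. }
    lra.
Qed.


Lemma InvB_fold n adj side y v :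
  (forall a b, (a < n)%nat -> (b < n)%nat -> adj a b = true -> side a <> side b) ->
  forall l MR MP, (forall w, In w l -> (w < n)%nat /\ w <> v) -> InvB n side v MR MP ->
  InvB n side v (fold_left (ranking_step n adj allv y) l MR) (fold_left (ranking_step n adj (minus1 v) y) l MP).
Proof.
  intros Hb; induction l as [|w l IH]; intros MR MP Hl HI; simpl; auto.
  apply IH. intros; apply Hl; simpl; auto.
  destruct (Hl w) as [h1 h2]; simpl; auto. apply InvB_step; auto.
Qed.

Lemma matched_prefix_passive n adj S y l x : ~ In x l ->
  matchedb (fold_left (ranking_step n adj S y) l []) x = true ->
  passive (fold_left (ranking_step n adj S y) l []) x.
Proof.
  intros Hx Hm. apply matchedb_flat in Hm. unfold flat in Hm. apply in_flat_map in Hm.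
  destruct Hm as [[a b] [Hp Hin]]. apply passive_iff.
  destruct (fold_fst n adj S y l [] (a,b) Hp) as [[]|Ha]. simpl in *.
  destruct Hin as [->|[->|[]]]. contradiction. eauto.
Qed.

Lemma mono_g (g : R -> R) a b : (forall a b, 0 <= a -> a <= b -> b <= 1 -> g a <= g b) ->
  0 <= a -> a <= b -> b <= 1 -> g a <= g b.
Proof. auto. Qed.


Lemma pointwise n adj ord g u v y tau gam yu theta t :
  fo_instance n adj ord -> bipartite n adj ->
  (forall a b, 0 <= a -> a <= b -> b <= 1 -> g a <= g b) ->
  (forall x, 0 <= x <= 1 -> 0 <= g x <= 1) -> g 1 = 1 ->
  (u < n)%nat -> (v < n)%nat -> adj u v = true ->
  deadline_before ord u v ->
  (forall x, (x < n)%nat -> x <> u -> x <> v -> 0 <= y x < 1) ->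
  is_marginal_rank n adj ord (minus1 v) y u tau ->
  is_marginal_rank n adj ord (minus1 u) y v gam ->
  0 <= yu < 1 ->
  is_marginal_rank n adj ord allv (upd y u yu) v theta ->
  tau < yu -> 0 <= t <= 1 ->
  let z := zz y u yu v t in
  let M := ranking n adj ord allv z in
  Rmin (g yu) (1 - g theta) <= alpha g z M u /\
  0 <= alpha g z M v /\
  (gam < t -> 1 - g theta <= alpha g z M u + alpha g z M v) /\
  (gam < t -> t < theta -> 1 <= alpha g z M u + alpha g z M v).
Proof.
  intros [Hsym [Hirr Hperm]] [side Hside] Hgm Hgr Hg1 Hu Hv Hadj [l1 [l2 [l3 Hord]]] Hy Htau Hgam Hyu Hth Htauyu Ht z M.
  assert (Huv : u <> v) by (intros ->; rewrite Hirr in Hadj; discriminate).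
  assert (Hn : forall w, In w ord -> (w < n)%nat).
  { intros w Hw. apply (Permutation_in _ Hperm) in Hw. apply in_seq in Hw. lia. }
  assert (Hnd : NoDup ord) by (apply (Permutation_NoDup (Permutation_sym Hperm)); apply seq_NoDup).
  set (rest := l2 ++ v :: l3).
  assert (Hord' : ord = l1 ++ u :: rest) by (rewrite Hord; reflexivity).
  assert (Hu1 : ~ In u l1) by (apply (notin_prefix l1 rest u); rewrite <- Hord'; auto).
  assert (Hv1 : ~ In v l1).
  { intros h. apply (notin_prefix (l1 ++ u :: l2) l3 v). rewrite <- app_assoc. simpl. rewrite <- Hord. auto.
    apply in_or_app; auto. }
  assert (Hl1 : forall w, In w l1 -> (w < n)%nat) by (intros; apply Hn; rewrite Hord'; apply in_or_app; auto).
  assert (HMv : valid n allv M) by (apply fold_valid; auto; apply valid_nil).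
  assert (Hzr : forall x, (x < n)%nat -> 0 <= z x <= 1) by (intros x hx; apply (zz_range y u yu v t x n); auto).
  assert (Hflat : forall x, In x (flat M) -> 0 <= z x <= 1) by (intros x hx; apply Hzr; apply (proj2 HMv x hx)).
  assert (Hau : 0 <= alpha g z M u) by (apply alpha_nonneg; auto).
  assert (Hav : 0 <= alpha g z M v) by (apply alpha_nonneg; auto).
  pose proof (marg_range _ _ _ _ _ _ _ Hth) as Hthr.
  pose proof (Hgr theta Hthr) as Hgth.
  assert (HMeq : forall E, fold_left (ranking_step n adj allv z) l1 [] = E ->
     M = fold_left (ranking_step n adj allv z) rest (ranking_step n adj allv z E u)).
  { intros E HE. unfold M, ranking. rewrite Hord', fold_left_app, HE. reflexivity. }
  assert (Hpair : forall a b, In (a,b) M -> alpha g z M a = 1 - g (z b) /\ alpha g z M b = g (z b)).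
  { intros a b h. apply alpha_pair; auto. apply HMv. }
  split; [|split; [exact Hav|]].
  -
    set (ER := fold_left (ranking_step n adj allv z) l1 []).
    set (EP := fold_left (ranking_step n adj (minus1 v) z) l1 []).
    assert (HI : InvB n side v ER EP).
    { apply InvB_fold. intros; apply Hside; auto.
      intros w hw; split; auto. intros ->; contradiction.
      split; intros; reflexivity. }
    destruct (matchedb ER u) eqn:EmR.
    + assert (Hp : passive M u).
      { rewrite (HMeq ER eq_refl). apply fold_passive. apply (fold_passive n adj allv z [u]).
        apply matched_prefix_passive; auto. }
      apply passive_iff in Hp. destruct Hp as [a Ha]. destruct (Hpair a u Ha) as [_ ->].
      unfold z; rewrite zz_u; auto. apply Rmin_l.
    + assert (Hsuv : side u <> side v) by (apply Hside; auto).
      assert (EmP : matchedb EP u = false) by (apply (proj2 HI); auto).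
      destruct (TB n adj ord y u v yu theta t l1 rest Hirr Hord' Hv1 Hn Huv Hv Hadj Hy Hyu Hth EmP) as [TBa TBb].
      destruct (step_spec n adj (minus1 v) z EP u) as [[E1 _]|[[E1 [N1 _]]|[E1 [m0 [Hm0 _]]]]].
      * rewrite minus1_neq, EmP in E1 by auto. discriminate.
      * rewrite (TBb N1), Hg1. pose proof (Rmin_r (g yu) (1 - 1)). lra.
      * pose proof (TBa m0 Hm0) as Hzm0. fold z in Hzm0.
        pose proof Hm0 as Hm0'. destruct Hm0' as [[h1 [h2 [h3 h4]]] _].
        assert (Hm0v : m0 <> v) by (intros ->; rewrite minus1_self in h2; discriminate).
        assert (Hsm0 : side m0 = side v).
        { apply bool3 with (side u); auto. intros h. apply (Hside u m0); auto. }
        assert (HcR : cand n adj allv ER u m0).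
        { split; [exact h1|split; [reflexivity|split; [exact h3|]]]. apply (proj1 HI); auto. }
        destruct (step_spec n adj allv z ER u) as [[F1 _]|[[F1 [N2 _]]|[F1 [r [Hr Er]]]]].
        -- unfold allv in F1; rewrite EmR in F1; discriminate.
        -- exfalso; apply (N2 m0 HcR).
        -- assert (HuM : In (u,r) M).
           { rewrite (HMeq ER eq_refl), Er. apply fold_persist; simpl; auto. }
           destruct (Hpair u r HuM) as [-> _].
           assert (Hrn : (r < n)%nat) by apply Hr.
           assert (z r <= z m0).
           { destruct (proj2 Hr m0 HcR) as [->|hh]. lra. unfold ltk in hh. lra. }
           assert (g (z r) <= g theta) by (apply Hgm; [apply Hzr; auto|lra|lra]).
           pose proof (Rmin_r (g yu) (1 - g theta)). lra.
  -
    assert (HPC : gam < t -> exists r, In (u,r) M /\ (r = v \/ (z r <= theta /\ z r <= t))).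
    { intros Hgt.
      assert (N1 : ~ passive (fold_left (ranking_step n adj (minus1 v) z) l1 []) u).
      { intros Hp. apply (NPA n adj ord (minus1 v) y u tau yu Htau Htauyu (Rlt_le _ _ (proj2 Hyu))).
        unfold ranking. rewrite (fold_ext_S n adj (minus1 v) (upd y u yu) z).
        rewrite Hord', fold_left_app. apply fold_passive. exact Hp.
        intros x hx. unfold z, zz. rewrite (upd_neq _ v t x). auto.
        intros ->; rewrite minus1_self in hx; discriminate. }
      assert (N2 : ~ passive (fold_left (ranking_step n adj (minus1 u) z) l1 []) v).
      { intros Hp. apply (NPA n adj ord (minus1 u) y v gam t Hgam Hgt (proj2 Ht)).
        unfold ranking. rewrite (fold_ext_S n adj (minus1 u) (upd y v t) z).
        rewrite Hord', fold_left_app. apply fold_passive. exact Hp.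
        intros x hx. assert (x <> u) by (intros ->; rewrite minus1_self in hx; discriminate).
        unfold z, zz. destruct (Nat.eq_dec x v) as [->|hxv]. rewrite !upd_eq; auto.
        rewrite !upd_neq; auto. }
      destruct (triple n adj z u v Hirr Huv l1 [] Hu1 Hv1 Hl1 (valid_nil _ _) (valid_nil _ _) N1 N2) as [T1 T2].
      set (E := fold_left (ranking_step n adj allv z) l1 []) in *.
      assert (HEv : valid n (minus1 v) E) by (rewrite T1; apply fold_valid; auto; apply valid_nil).
      assert (HEu : valid n (minus1 u) E) by (rewrite T2; apply fold_valid; auto; apply valid_nil).
      assert (EmE : matchedb E u = false).
      { apply matchedb_false. apply (valid_notin n (minus1 u)); auto. apply minus1_self. }
      destruct (DU n adj z E u v Huv Hv Hadj HEv EmE) as [r [Er [_ Hr]]].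
      exists r. split.
      + rewrite (HMeq E eq_refl), Er. apply fold_persist; simpl; auto.
      + destruct Hr as [->|[Hr1 Hr2]]; auto. right. split.
        * assert (EmP : matchedb (fold_left (ranking_step n adj (minus1 v) z) l1 []) u = false) by (rewrite <- T1; auto).
          destruct (TB n adj ord y u v yu theta t l1 rest Hirr Hord' Hv1 Hn Huv Hv Hadj Hy Hyu Hth EmP) as [TBa _].
          apply TBa. fold z. rewrite <- T1. exact Hr1.
        * unfold ltk in Hr2. unfold z in Hr2 |- *. rewrite zz_v in Hr2. lra. }
    split.
    + intros Hgt. destruct (HPC Hgt) as [r [HuM [->|[Hr1 Hr2]]]].
      * destruct (Hpair u v HuM) as [-> ->]. lra.
      * destruct (Hpair u r HuM) as [-> _].
        assert (Hrn : (r < n)%nat) by (apply (proj2 HMv r); apply (in_flat_pair _ _ _ HuM)).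
        assert (g (z r) <= g theta) by (apply Hgm; [apply Hzr; auto|lra|lra]). lra.
    + intros Hgt Htt. destruct (HPC Hgt) as [r [HuM [->|[Hr1 Hr2]]]].
      * destruct (Hpair u v HuM) as [-> ->]. lra.
      * destruct (Hpair u r HuM) as [-> _].
        assert (Hrn : (r < n)%nat) by (apply (proj2 HMv r); apply (in_flat_pair _ _ _ HuM)).
        assert (Hp : passive M v).
        { unfold M, z, zz. apply (PBM n adj ord allv (upd y u yu) v theta t); auto. lra. }
        apply passive_iff in Hp. destruct Hp as [a Ha]. destruct (Hpair a v Ha) as [_ ->].
        unfold z at 2. rewrite zz_v.
        assert (g (z r) <= g t) by (apply Hgm; [apply Hzr; auto|lra|lra]). lra.
Qed.


Lemma SF_ext (f f' : R -> R) a b (p : IsStepFun f a b) : a <= b ->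
  (forall x, a < x < b -> f x = f' x) ->
  {p' : IsStepFun f' a b | RiemannInt_SF (mkStepFun p') = RiemannInt_SF (mkStepFun p)}.
Proof.
  intros hab Heq. destruct p as [l [lf H]].
  assert (H' : adapted_couple f' a b l lf).
  { destruct H as [H1 [H2 [H3 [H4 H5]]]]. split; [exact H1|split; [exact H2|split; [exact H3|split; [exact H4|]]]].
    intros i Hi x Hx. rewrite <- (H5 i Hi x Hx). symmetry. apply Heq.
    rewrite Rmin_left in H2 by lra. rewrite Rmax_right in H3 by lra.
    destruct (RList_P6 l) as [HR _]. specialize (HR H1).
    assert (h1 : pos_Rl l 0 <= pos_Rl l i) by (apply HR; lia).
    assert (h2 : pos_Rl l (S i) <= pos_Rl l (pred (length l))) by (apply HR; lia).
    unfold open_interval in Hx. lra. }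
  exists (existT _ l (existT _ lf H')). reflexivity.
Qed.

Lemma SF_const (f : R -> R) a b c : a <= b -> (forall x, a < x < b -> f x = c) ->
  {p : IsStepFun f a b | RiemannInt_SF (mkStepFun p) = c * (b - a)}.
Proof.
  intros hab Hf.
  assert (H : adapted_couple f a b [a; b] [c]).
  { split; [|split; [|split; [|split]]].
    - unfold ordered_Rlist. intros i Hi. simpl in Hi. destruct i; [simpl; lra|lia].
    - simpl. rewrite Rmin_left; lra.
    - simpl. rewrite Rmax_right; lra.
    - reflexivity.
    - intros i Hi. simpl in Hi. destruct i; [|lia]. simpl. intros x Hx. apply Hf. exact Hx. }
  exists (existT _ [a;b] (existT _ [c] H)).
  unfold RiemannInt_SF. simpl. destruct (Rle_dec a b); [ring|lra].
Qed.

Lemma mono_approx (g : R -> R) (Hgm : forall a b, 0 <= a -> a <= b -> b <= 1 -> g a <= g b)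
  (h : R) (Hh : 0 < h) : forall k a, 0 <= a -> a + INR k * h <= 1 ->
  {phi : R -> R & {psi : R -> R & {pphi : IsStepFun phi a (a + INR k * h) &
   {ppsi : IsStepFun psi a (a + INR k * h) |
     (forall t, a <= t <= a + INR k * h -> Rabs (g t - phi t) <= psi t) /\
     RiemannInt_SF (mkStepFun ppsi) = h * (g (a + INR k * h) - g a)}}}}.
Proof.
  induction k as [|k IH]; intros a Ha Hk.
  - replace (a + INR 0 * h) with a by (simpl; ring).
    destruct (SF_const (fun _ => g a) a a (g a) (Rle_refl a)) as [p1 _]; [auto|].
    destruct (SF_const (fun _ => 0) a a 0 (Rle_refl a)) as [p2 I2]; [auto|].
    exists (fun _ => g a), (fun _ => 0), p1, p2. split.
    + intros t Ht. replace t with a by lra. rewrite Rminus_diag, Rabs_R0. lra.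
    + rewrite I2. ring.
  - assert (HS : a + INR (S k) * h = (a + h) + INR k * h) by (rewrite S_INR; ring).
    rewrite HS in Hk |- *.
    assert (Hk0 : 0 <= INR k * h) by (apply Rmult_le_pos; [apply pos_INR|lra]).
    destruct (IH (a + h)) as [phi' [psi' [pphi' [ppsi' [Hb Hi]]]]]; [lra|lra|].
    set (e := a + h + INR k * h) in *.
    set (phi := fun t => if Rlt_dec t (a + h) then g a else phi' t).
    set (psi := fun t => if Rlt_dec t (a + h) then g (a + h) - g a else psi' t).
    destruct (SF_const phi a (a + h) (g a)) as [p1 _]; [lra| intros x Hx; unfold phi; destruct (Rlt_dec x (a+h)); [auto|lra]|].
    destruct (SF_ext phi' phi (a + h) e pphi') as [p2 _]; [unfold e; lra| intros x Hx; unfold phi; destruct (Rlt_dec x (a+h)); [lra|auto]|].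
    destruct (SF_const psi a (a + h) (g (a + h) - g a)) as [q1 I1]; [lra| intros x Hx; unfold psi; destruct (Rlt_dec x (a+h)); [auto|lra]|].
    destruct (SF_ext psi' psi (a + h) e ppsi') as [q2 I2]; [unfold e; lra| intros x Hx; unfold psi; destruct (Rlt_dec x (a+h)); [lra|auto]|].
    exists phi, psi, (StepFun_P46 p1 p2), (StepFun_P46 q1 q2). split.
    + intros t Ht. unfold phi, psi. destruct (Rlt_dec t (a + h)).
      * assert (g a <= g t) by (apply Hgm; lra). assert (g t <= g (a + h)) by (apply Hgm; unfold e in *; lra).
        rewrite Rabs_right by lra. lra.
      * apply Hb. lra.
    + rewrite <- (StepFun_P43 q1 q2 (StepFun_P46 q1 q2)). rewrite I1, I2, Hi. ring.
Qed.

Lemma mono_integrable (g : R -> R) (Hgm : forall a b, 0 <= a -> a <= b -> b <= 1 -> g a <= g b)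
  (Hgr : forall x, 0 <= x <= 1 -> 0 <= g x <= 1) A B :
  0 <= A -> A <= B -> B <= 1 -> Riemann_integrable g A B.
Proof.
  intros HA HAB HB. destruct (Rle_lt_or_eq_dec A B HAB) as [Hlt|Heq]; [|subst; apply RiemannInt_P7].
  unfold Riemann_integrable. intros eps.
  set (N := S (Z.to_nat (up ((B - A) / eps)))).
  assert (HN : (B - A) / eps < INR N).
  { unfold N. rewrite S_INR. destruct (archimed ((B - A) / eps)) as [h1 _].
    assert (h2 : IZR (up ((B - A) / eps)) <= INR (Z.to_nat (up ((B - A) / eps)))).
    { destruct (Z_lt_le_dec (up ((B - A) / eps)) 0) as [hz|hz].
      - pose proof (pos_INR (Z.to_nat (up ((B - A) / eps)))). apply IZR_lt in hz. lra.
      - rewrite INR_IZR_INZ, Z2Nat.id by auto. lra. }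
    lra. }
  assert (HNp : 0 < INR N) by (unfold N; rewrite S_INR; pose proof (pos_INR (Z.to_nat (up ((B - A) / eps)))); lra).
  set (h := (B - A) / INR N).
  assert (Hh : 0 < h) by (unfold h; apply Rdiv_lt_0_compat; lra).
  assert (He : A + INR N * h = B) by (unfold h; field; lra).
  assert (Hheps : h < eps).
  { unfold h. apply Rmult_lt_reg_r with (INR N); auto. unfold Rdiv. rewrite Rmult_assoc, Rinv_l by lra.
    pose proof (cond_pos eps). apply Rmult_lt_reg_r with (/ eps). apply Rinv_0_lt_compat; lra.
    replace (eps * INR N * / eps) with (INR N) by (field; lra). lra. }
  destruct (mono_approx g Hgm h Hh N A HA) as [phi [psi [pphi [ppsi [Hb Hi]]]]]; [lra|].
  revert pphi ppsi Hb Hi. rewrite He. intros pphi ppsi Hb Hi.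
  exists (mkStepFun pphi), (mkStepFun ppsi). split.
  - intros t Ht. rewrite Rmin_left, Rmax_right in Ht by lra. simpl. apply Hb; lra.
  - rewrite Hi. assert (g A <= g B) by (apply Hgm; lra). pose proof (Hgr A). pose proof (Hgr B).
    rewrite Rabs_right. apply Rle_lt_trans with (h * 1); [apply Rmult_le_compat_l; lra|lra].
    apply Rle_ge, Rmult_le_pos; lra.
Qed.


Lemma integrable_split (f : R -> R) (P : list R) : forall A B, A <= B ->
  (forall a b, A <= a -> a < b -> b <= B -> (forall p, In p P -> ~ (a < p < b)) -> Riemann_integrable f a b) ->
  Riemann_integrable f A B.
Proof.
  induction P as [|p P IH]; intros A B HAB H.
  - destruct (Rlt_dec A B) as [h|h].
    + apply H; auto; lra.
    + assert (A = B) by lra. subst. apply RiemannInt_P7.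
  - destruct (Rlt_dec A p) as [h1|h1]; [destruct (Rlt_dec p B) as [h2|h2]|].
    + apply RiemannInt_P24 with p.
      * apply IH; [lra|]. intros a b ha hab hb hP. apply H; auto; [lra|].
        intros q [<-|hq]; [lra|auto].
      * apply IH; [lra|]. intros a b ha hab hb hP. apply H; auto; [lra|].
        intros q [<-|hq]; [lra|auto].
    + apply IH; auto. intros a b ha hab hb hP. apply H; auto.
      intros q [<-|hq]; [lra|auto].
    + apply IH; auto. intros a b ha hab hb hP. apply H; auto.
      intros q [<-|hq]; [lra|auto].
Qed.

Module CQ.
Import Coquelicot.Coquelicot.
Lemma ri_ext_open (f f' : R -> R) a b : a <= b -> (forall x, a < x < b -> f x = f' x) ->
  Riemann_integrable f a b -> Riemann_integrable f' a b.
Proof.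
  intros hab H pr. apply ex_RInt_Reals_0. apply (ex_RInt_ext f).
  intros x. rewrite Rmin_left, Rmax_right by lra. auto.
  apply ex_RInt_Reals_1. exact pr.
Qed.
End CQ.
Definition ri_ext_open := CQ.ri_ext_open.


Lemma alpha_fun_integrable g y u yu v M0 w A B :
  (forall a b, 0 <= a -> a <= b -> b <= 1 -> g a <= g b) -> (forall x, 0 <= x <= 1 -> 0 <= g x <= 1) ->
  0 <= A -> A <= B -> B <= 1 ->
  Riemann_integrable (fun t => alpha g (zz y u yu v t) M0 w) A B.
Proof.
  intros Hgm Hgr HA HAB HB.
  pose proof (mono_integrable g Hgm Hgr A B HA HAB HB) as Hg.
  unfold alpha.
  destruct (find (fun p => Nat.eqb (fst p) w) M0) as [[a b]|].
  - destruct (Nat.eq_dec b v) as [->|hb].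
    + apply Riemann_integrable_ext with (fun t => 1 + (-1) * g t).
      intros x _. rewrite zz_v. ring.
      apply RiemannInt_P10; auto. apply Riemann_integrable_const.
    + apply Riemann_integrable_ext with (fun _ => 1 - g (zz y u yu v 0 b)).
      intros x _. rewrite (zz_nv y u yu v x 0 b hb). reflexivity.
      apply Riemann_integrable_const.
  - destruct (find (fun p => Nat.eqb (snd p) w) M0).
    + destruct (Nat.eq_dec w v) as [->|hw].
      * apply Riemann_integrable_ext with g; auto. intros x _. rewrite zz_v. reflexivity.
      * apply Riemann_integrable_ext with (fun _ => g (zz y u yu v 0 w)).
        intros x _. rewrite (zz_nv y u yu v x 0 w hw). reflexivity.
        apply Riemann_integrable_const.
    + apply Riemann_integrable_const.
Qed.

Definition Fint n adj ord g u v y gam yu : R -> R :=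
  fun yv =>
    let z := upd (upd y u yu) v yv in
    let M := ranking n adj ord allv z in
    alpha g z M u + alpha g z M v * indic gam yv.

Lemma avoid_facts p A B t t0 : A < t < B -> A < t0 < B -> ~ (A < p < B) ->
  (t < p <-> t0 < p) /\ t <> p /\ t0 <> p.
Proof. intros h1 h2 h3. destruct (Rle_dec p A); [lra|]. destruct (Rle_dec B p); [lra|]. exfalso; apply h3; lra. Qed.

Lemma flip_lt t t0 P : (t < P <-> t0 < P) -> t <> P -> t0 <> P -> (P < t <-> P < t0).
Proof. intros [h1 h2] h3 h4. split; intros h.
  - destruct (Rtotal_order P t0) as [h'|[h'|h']]; auto. congruence. exfalso. pose proof (h2 h'). lra.
  - destruct (Rtotal_order P t) as [h'|[h'|h']]; auto. congruence. exfalso. pose proof (h1 h'). lra.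
Qed.

Lemma Fint_piece n adj ord g u v y gam yu A B :
  (forall a b, 0 <= a -> a <= b -> b <= 1 -> g a <= g b) -> (forall x, 0 <= x <= 1 -> 0 <= g x <= 1) ->
  0 <= A -> A < B -> B <= 1 ->
  (forall p, In p (gam :: map (upd y u yu) (seq 0 n)) -> ~ (A < p < B)) ->
  Riemann_integrable (Fint n adj ord g u v y gam yu) A B.
Proof.
  intros Hgm Hgr HA HAB HB Hp.
  set (t0 := (A + B) / 2).
  set (M0 := ranking n adj ord allv (zz y u yu v t0)).
  set (c := indic gam t0).
  apply ri_ext_open with (fun t => alpha g (zz y u yu v t) M0 u + c * alpha g (zz y u yu v t) M0 v); [lra| |].
  - intros t Ht. unfold Fint. cbv zeta. fold (zz y u yu v t).
    assert (Ht0 : A < t0 < B) by (unfold t0; lra).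
    assert (HM : ranking n adj ord allv (zz y u yu v t) = M0).
    { unfold M0, ranking. apply fold_ext. intros a b ha hb _ _.
      assert (Hq : forall x, (x < n)%nat -> x <> v -> (t < zz y u yu v t x <-> t0 < zz y u yu v t0 x) /\
                 t <> zz y u yu v t x /\ t0 <> zz y u yu v t0 x).
      { intros x hx hxv. rewrite (zz_nv y u yu v t0 t x hxv).
        assert (E : zz y u yu v t x = upd y u yu x) by (unfold zz; rewrite upd_neq; auto).
        rewrite E. apply avoid_facts with A B; auto. apply Hp. right. apply in_map. apply in_seq. lia. }
      destruct (Nat.eq_dec a v) as [->|hav]; destruct (Nat.eq_dec b v) as [->|hbv].
      - split; intros h; exfalso; eapply ltk_irrefl; eauto.
      - destruct (Hq b hb hbv) as [q1 [q2 q3]]. unfold ltk. rewrite !zz_v.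
        rewrite (zz_nv y u yu v t0 t b hbv) in q1, q3 |- *.
        split; intros [h|[h h']].
        + left; apply q1; auto.
        + exfalso; apply q2; auto.
        + left; apply q1; auto.
        + exfalso; apply q3; auto.
      - destruct (Hq a ha hav) as [q1 [q2 q3]]. unfold ltk. rewrite !zz_v.
        rewrite (zz_nv y u yu v t0 t a hav) in q1, q3 |- *.
        pose proof (flip_lt _ _ _ q1 q2 q3) as q4.
        split; intros [h|[h h']].
        + left; apply q4; auto.
        + exfalso; apply q2; auto.
        + left; apply q4; auto.
        + exfalso; apply q3; auto.
      - apply ltk_agree; apply zz_nv; auto. }
    rewrite HM. unfold c. f_equal. rewrite Rmult_comm. f_equal.
    unfold indic. assert (Hgg : ~ (A < gam < B)) by (apply Hp; left; auto).
    destruct (Rlt_dec gam t), (Rlt_dec gam t0); auto; exfalso; lra.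
  - apply RiemannInt_P10; apply alpha_fun_integrable; auto; lra.
Qed.


Theorem lemma4p3
  (n : nat) (adj : nat -> nat -> bool) (ord : list nat)
  (g : R -> R) (u v : nat) (y : nat -> R) (tau gam yu theta : R) :
  fo_instance n adj ord ->
  bipartite n adj ->
  (forall a b, 0 <= a -> a <= b -> b <= 1 -> g a <= g b) ->
  (forall x, 0 <= x <= 1 -> 0 <= g x <= 1) ->
  g 1 = 1 ->
  (u < n)%nat -> (v < n)%nat -> adj u v = true ->
  deadline_before ord u v ->
  (forall x, (x < n)%nat -> x <> u -> x <> v -> 0 <= y x < 1) ->
  is_marginal_rank n adj ord (minus1 v) y u tau ->
  is_marginal_rank n adj ord (minus1 u) y v gam ->
  0 <= yu < 1 ->
  is_marginal_rank n adj ord allv (upd y u yu) v theta ->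
  tau < yu ->
  exists pr : Riemann_integrable
      (fun yv =>
         let z := upd (upd y u yu) v yv in
         let M := ranking n adj ord allv z in
         alpha g z M u + alpha g z M v * indic gam yv) 0 1,
    RiemannInt pr >=
      1 - gam - (1 - theta) * g theta + gam * Rmin (g yu) (1 - g theta).
Proof.
  intros Hfo Hbip Hgm Hgr Hg1 Hu Hv Hadj Hdl Hy Htau Hgam Hyu Hth Htauyu.
  set (F := Fint n adj ord g u v y gam yu).
  assert (pr : Riemann_integrable F 0 1).
  { apply (integrable_split F (gam :: map (upd y u yu) (seq 0 n))); [lra|].
    intros a b ha hab hb hP. apply Fint_piece; auto; lra. }
  exists pr.
  pose proof (marg_range _ _ _ _ _ _ _ Hth) as Hthr.
  pose proof (marg_range _ _ _ _ _ _ _ Hgam) as Hgamr.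
  pose proof (Hgr theta Hthr) as Hgth.
  set (m := Rmin (g yu) (1 - g theta)).
  set (c1 := gam). set (c2 := Rmax gam theta).
  assert (Hc1 : 0 <= c1) by (unfold c1; lra).
  assert (Hc2 : c1 <= c2 <= 1) by (unfold c1, c2; split; [apply Rmax_l|apply Rmax_lub; lra]).
  assert (PW : forall t, 0 <= t <= 1 ->
     Rmin (g yu) (1 - g theta) <= alpha g (zz y u yu v t) (ranking n adj ord allv (zz y u yu v t)) u /\
     0 <= alpha g (zz y u yu v t) (ranking n adj ord allv (zz y u yu v t)) v /\
     (gam < t -> 1 - g theta <= alpha g (zz y u yu v t) (ranking n adj ord allv (zz y u yu v t)) u +
                                 alpha g (zz y u yu v t) (ranking n adj ord allv (zz y u yu v t)) v) /\
     (gam < t -> t < theta -> 1 <= alpha g (zz y u yu v t) (ranking n adj ord allv (zz y u yu v t)) u +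
                                 alpha g (zz y u yu v t) (ranking n adj ord allv (zz y u yu v t)) v)).
  { intros t Ht. exact (pointwise n adj ord g u v y tau gam yu theta t Hfo Hbip Hgm Hgr Hg1 Hu Hv Hadj Hdl Hy Htau Hgam Hyu Hth Htauyu Ht). }
  assert (HF : forall t, F t = alpha g (zz y u yu v t) (ranking n adj ord allv (zz y u yu v t)) u +
                            alpha g (zz y u yu v t) (ranking n adj ord allv (zz y u yu v t)) v * indic gam t)
    by (intros; reflexivity).
  assert (pr1 : Riemann_integrable F 0 c2) by (apply (RiemannInt_P22 pr); lra).
  assert (pr2 : Riemann_integrable F c2 1) by (apply (RiemannInt_P23 pr); lra).
  assert (pr01 : Riemann_integrable F 0 c1) by (apply (RiemannInt_P22 pr1); lra).
  assert (pr12 : Riemann_integrable F c1 c2) by (apply (RiemannInt_P23 pr1); lra).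
  change (@RiemannInt F 0 1 pr >= 1 - gam - (1 - theta) * g theta + gam * Rmin (g yu) (1 - g theta)).
  rewrite <- (RiemannInt_P26 pr1 pr2 pr), <- (RiemannInt_P26 pr01 pr12 pr1).
  assert (B1 : m * (c1 - 0) <= RiemannInt pr01).
  { rewrite <- (RiemannInt_const m 0 c1 (Riemann_integrable_const m 0 c1)).
    apply RiemannInt_P19; [unfold c1; lra|]. intros x Hx. rewrite HF.
    destruct (PW x ltac:(unfold c1 in Hx; lra)) as [h1 _].
    unfold indic. destruct (Rlt_dec gam x); [unfold c1 in Hx; lra|]. unfold m. lra. }
  assert (B2 : 1 * (c2 - c1) <= RiemannInt pr12).
  { rewrite <- (RiemannInt_const 1 c1 c2 (Riemann_integrable_const 1 c1 c2)).
    apply RiemannInt_P19; [lra|]. intros x Hx. rewrite HF.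
    unfold c1, c2 in Hx. assert (x < theta).
    { destruct (Rle_dec gam theta). rewrite Rmax_right in Hx; lra. rewrite Rmax_left in Hx; lra. }
    destruct (PW x ltac:(lra)) as [_ [_ [_ h4]]].
    unfold indic. destruct (Rlt_dec gam x); [|lra]. specialize (h4 ltac:(lra) ltac:(lra)). lra. }
  assert (B3 : (1 - g theta) * (1 - c2) <= RiemannInt pr2).
  { rewrite <- (RiemannInt_const (1 - g theta) c2 1 (Riemann_integrable_const _ c2 1)).
    apply RiemannInt_P19; [lra|]. intros x Hx. rewrite HF.
    assert (gam < x) by (unfold c2 in Hx; pose proof (Rmax_l gam theta); lra).
    destruct (PW x ltac:(lra)) as [_ [_ [h3 _]]].
    unfold indic. destruct (Rlt_dec gam x); [|lra]. specialize (h3 ltac:(lra)). lra. }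
  apply Rle_ge.
  assert (Ec1 : c1 = gam) by reflexivity.
  assert (Em : m = Rmin (g yu) (1 - g theta)) by reflexivity.
  rewrite <- Em.
  destruct (Rle_dec gam theta) as [hgt|hgt].
  - assert (Ec2 : c2 = theta) by (unfold c2; apply Rmax_right; lra).
    rewrite Ec2, Ec1 in *. nra.
  - assert (Ec2 : c2 = gam) by (unfold c2; apply Rmax_left; lra).
    rewrite Ec2, Ec1 in *.
    assert (0 <= g theta * (gam - theta)) by (apply Rmult_le_pos; lra). nra.
Qed.
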